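(* For a positive integer $M$, let $\mathcal O(M)$ be the set of distinct orbits $o(\mathbf{x})$ with $\mathbf{x}\in[0,M]^2\cap\mathbb{Z}^2$. Then: - $\frac1{\#\mathcal O(M)}\sum_{o\in\mathcal O(M)}\operatorname{diam}_E(o)=\frac{7\sqrt2}{6}M+O(1)$; - the average over $\mathcal O(M)$ of the side length of the smallest axis-parallel square containing the orbit is $\frac76M+O(1)$; - the average over $\mathcal O(M)$ of $\operatorname{length}(o)$ is $\frac{14}{3}M+O(1)$.
   Context: Define $\mathcal K_1(x_1,x_2)=(-x_1+x_2,x_2)$ and $\mathcal K_2(x_1,x_2)=(x_1,x_1-x_2)$ on $\mathbb{Z}^2$. The orbit $o(\mathbf{x})$ is the set of points obtained from $\mathbf{x}$ by repeated application of $\mathcal K_1,\mathcal K_2$: $(x_1,x_2)$, $(-x_1+x_2,x_2)$, $(-x_1+x_2,-x_1)$, $(-x_2,-x_1)$, $(-x_2,x_1-x_2)$, $(x_1,x_1-x_2)$. Definitions of the averaged quantities: - $\operatorname{diam}_E(o)$ is the maximum Euclidean distance between two points of $o$. - $\operatorname{length}(o(\mathbf{x}))=2\big(|2x_1-x_2|+|x_1+x_2|+|2x_2-x_1|\big)$ is the Euclidean length of the closed path through the six points in the listed order. - The smallest axis-parallel rectangle containing $o(\mathbf{x})$ is a square of side $\max\{|x_1+x_2|,|x_1-2x_2|,|x_2-2x_1|\}$. *)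

(* Defs.v *)
From HB Require Import structures.
From mathcomp Require Import all_boot all_order all_algebra finmap.
From mathcomp Require Import reals.
Set Implicit Arguments. Unset Strict Implicit. Unset Printing Implicit Defensive.
Import Order.TTheory GRing.Theory Num.Theory.
Local Open Scope fset_scope.
Local Open Scope ring_scope.

Definition pt := (int * int)%type.

Definition K1 (x : pt) : pt := (- x.1 + x.2, x.2).
Definition K2 (x : pt) : pt := (x.1, x.1 - x.2).

Definition orbit_list (x : pt) : seq pt :=
  [:: x; K1 x; K2 (K1 x); K1 (K2 (K1 x)); K2 (K1 (K2 (K1 x)));
      K1 (K2 (K1 (K2 (K1 x))))].
Definition orbit (x : pt) : {fset pt} := [fset y | y in orbit_list x].

Definition orbits (M : nat) : {fset {fset pt}} :=
  [fset o | o in [seq orbit (i%:Z, j%:Z) | i <- iota 0 M.+1, j <- iota 0 M.+1]].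

Definition distE (R : realType) (p q : pt) : R :=
  Num.sqrt (((p.1 - q.1)%:~R) ^+ 2 + ((p.2 - q.2)%:~R) ^+ 2).

Definition diamE (R : realType) (o : {fset pt}) : R :=
  \big[Num.max/0]_(p <- o) \big[Num.max/0]_(q <- o) distE R p q.

Definition rep (o : {fset pt}) : pt := head (0, 0) (o : seq pt).

(* side of the smallest axis-parallel square containing o:
   max(width, height) of the bounding box *)
Definition sq_side (R : realType) (o : {fset pt}) : R :=
  let r := rep o in
  let maxx := \big[Num.max/r.1]_(p <- o) p.1 in
  let minx := \big[Num.min/r.1]_(p <- o) p.1 in
  let maxy := \big[Num.max/r.2]_(p <- o) p.2 in
  let miny := \big[Num.min/r.2]_(p <- o) p.2 in
  (Num.max (maxx - minx) (maxy - miny))%:~R.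

(* length(o(x)) = 2(|2x1-x2| + |x1+x2| + |2x2-x1|)  (independent of the
   representative x of the orbit) *)
Definition length_formula (x : pt) : int :=
  2 * (`|2 * x.1 - x.2| + `|x.1 + x.2| + `|2 * x.2 - x.1|).
Definition orbit_length (R : realType) (o : {fset pt}) : R :=
  (length_formula (rep o))%:~R.

Definition avgO (R : realType) (f : {fset pt} -> R) (M : nat) : R :=
  (\sum_(o <- orbits M) f o) / (#|` orbits M|)%:R.

(* Main.v *)
Require Import Defs.
From HB Require Import structures.
From mathcomp Require Import all_boot all_order all_algebra finmap.
From mathcomp Require Import reals.
From mathcomp Require Import zify ring lra.
Import Order.TTheory GRing.Theory Num.Theory.
Local Open Scope ring_scope.
Notation orb := Defs.orbit.

Lemma mem_orb p x : (p \in orb x) = (p \in orbit_list x).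
Proof. by apply/imfsetP/idP => [[y /= yin ->]|pin] //; exists p. Qed.

Lemma orbit_listE (a b : int) : orbit_list (a, b) =
  [:: (a, b); (b - a, b); (b - a, - a); (- b, - a); (- b, a - b); (a, a - b)].
Proof.
rewrite /orbit_list /K1 /K2 /=.
congr [:: _; _; _; _; _; _]; congr pair; ring.
Qed.

Lemma orbit_ind (a b : int) (P : pt -> Prop) :
  P (a, b) -> P (b - a, b) -> P (b - a, - a) -> P (- b, - a) -> P (- b, a - b) -> P (a, a - b) ->
  forall p, p \in orb (a, b) -> P p.
Proof.
move=> H1 H2 H3 H4 H5 H6 p; rewrite mem_orb orbit_listE !inE.
by do 5 (case/orP=> [/eqP->//|]); move/eqP->.
Qed.

Lemma in_orb (a b : int) p :
  p \in orb (a, b) = [|| p == (a, b), p == (b - a, b), p == (b - a, - a),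
         p == (- b, - a), p == (- b, a - b) | p == (a, a - b)].
Proof. by rewrite mem_orb orbit_listE !inE. Qed.

Lemma orbit_K1 (a b : int) : orb (b - a, b) = orb (a, b).
Proof.
apply/fsetP=> p; rewrite !in_orb.
have -> : b - (b - a) = a by ring.
have -> : b - a - b = - a by ring.
have -> : - (b - a) = a - b by ring.
by case: (p == (a,b)); case: (p == (b-a,b)); case: (p == (b-a,-a)); case: (p == (-b,-a));
  case: (p == (-b,a-b)); case: (p == (a,a-b)).
Qed.

Lemma orbit_K2 (a b : int) : orb (a, a - b) = orb (a, b).
Proof.
apply/fsetP=> p; rewrite !in_orb.
have -> : a - (a - b) = b by ring.
have -> : a - b - a = - b by ring.
have -> : - (a - b) = b - a by ring.
by case: (p == (a,b)); case: (p == (b-a,b)); case: (p == (b-a,-a)); case: (p == (-b,-a));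
  case: (p == (-b,a-b)); case: (p == (a,a-b)).
Qed.

Lemma orbit_swap0 (a : int) : orb (a, 0) = orb (0, a).
Proof.
apply/fsetP=> p; rewrite !in_orb !(sub0r, subr0, oppr0).
by case: (p == (a,0)); case: (p == (-a,0)); case: (p == (-a,-a)); case: (p == (0,-a));
  case: (p == (0,a)); case: (p == (a,a)).
Qed.


Lemma rep_in (o : {fset pt}) P : P \in o -> rep o \in o.
Proof.
rewrite /rep => Po; case E: (enum_fset o) => [|h t] /=.
  by move: Po; rewrite -[P \in o]/(P \in enum_fset o) E.
by rewrite -[h \in o]/(h \in enum_fset o) E mem_head.
Qed.

Lemma maxP (o : {fset pt}) (x0 : int) (f : pt -> int) (X : int) :
  x0 <= X -> (forall p, p \in o -> f p <= X) -> \big[Num.max/x0]_(p <- o) f p <= X.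
Proof.
move=> h1 h2; rewrite big_seq; apply: bigmax_le => // p; exact: h2.
Qed.

Lemma maxG (o : {fset pt}) (x0 : int) (f : pt -> int) p :
  p \in o -> f p <= \big[Num.max/x0]_(q <- o) f q.
Proof. by move=> po; apply: le_bigmax_seq. Qed.

Lemma minP (o : {fset pt}) (x0 : int) (f : pt -> int) (X : int) :
  X <= x0 -> (forall p, p \in o -> X <= f p) -> X <= \big[Num.min/x0]_(p <- o) f p.
Proof.
move=> h1 h2; rewrite big_seq; apply: le_bigmin => // p; exact: h2.
Qed.

Lemma minG (o : {fset pt}) (x0 : int) (f : pt -> int) p :
  p \in o -> \big[Num.min/x0]_(q <- o) f q <= f p.
Proof. by move=> po; apply: ge_bigmin_seq. Qed.

Definition inbox (x0 y0 m : int) (p : pt) := x0 <= p.1 <= x0 + m /\ y0 <= p.2 <= y0 + m.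

Lemma box_sq (R : realType) (o : {fset pt}) (x0 y0 m : int) P :
  (forall p, p \in o -> inbox x0 y0 m p) ->
  P \in o -> (P.1 + m, P.2 + m) \in o ->
  sq_side R o = m%:~R.
Proof.
move=> hb Po Qo; rewrite /sq_side; congr intmul.
have ro := rep_in _ _ Po.
have [/andP[h1 h2] /andP[h3 h4]] := hb _ ro.
have a1 : \big[Num.max/(rep o).1]_(p <- o) p.1 <= x0 + m.
  by apply: maxP => // p /hb [/andP[]] _ ? _.
have a2 : x0 <= \big[Num.min/(rep o).1]_(p <- o) p.1.
  by apply: minP => // p /hb [/andP[]] ? _ _.
have a3 : \big[Num.max/(rep o).2]_(p <- o) p.2 <= y0 + m.
  by apply: maxP => // p /hb [_ /andP[]] _ ?.
have a4 : y0 <= \big[Num.min/(rep o).2]_(p <- o) p.2.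
  by apply: minP => // p /hb [_ /andP[]] ? _.
have b1 := maxG _ (rep o).1 (fun p : pt => p.1) _ Qo.
have b2 := minG _ (rep o).1 (fun p : pt => p.1) _ Po.
have b3 := maxG _ (rep o).2 (fun p : pt => p.2) _ Qo.
have b4 := minG _ (rep o).2 (fun p : pt => p.2) _ Po.
have [/andP[c1 c2] /andP[c3 c4]] := hb _ Po.
simpl in *.
set A := \big[_/_]_(p <- o) p.1 in a1 b1 *.
set B := \big[_/_]_(p <- o) p.1 in a2 b2 *.
set C := \big[_/_]_(p <- o) p.2 in a3 b3 *.
set D := \big[_/_]_(p <- o) p.2 in a4 b4 *.
have -> : A - B = m by lia.
have -> : C - D = m by lia.
by rewrite maxxx.
Qed.
Lemma distE_int (R : realType) (p q : pt) :
  distE R p q = Num.sqrt (((p.1 - q.1) ^+ 2 + (p.2 - q.2) ^+ 2)%:~R).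
Proof. by rewrite /distE !(rmorphD, rmorphN, rmorphXn). Qed.

Lemma sqrt2m (R : realType) (m : int) : 0 <= m ->
  Num.sqrt 2 * (m%:~R : R) = Num.sqrt ((2 * m ^+ 2)%:~R).
Proof.
move=> m0; rewrite rmorphM /= (_ : 2%:~R = 2) // rmorphXn /= sqrtrM // sqrtr_sqr ger0_norm //.
by rewrite ler0z.
Qed.

Lemma box_diam (R : realType) (o : {fset pt}) (x0 y0 m : int) P :
  0 <= m ->
  (forall p, p \in o -> inbox x0 y0 m p) ->
  P \in o -> (P.1 + m, P.2 + m) \in o ->
  diamE R o = Num.sqrt 2 * m%:~R.
Proof.
move=> m0 hb Po Qo; rewrite sqrt2m //; apply/le_anti/andP; split; rewrite /diamE.
  rewrite big_seq; apply: bigmax_le; first exact: sqrtr_ge0.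
  move=> p po; rewrite big_seq; apply: bigmax_le; first exact: sqrtr_ge0.
  move=> q qo; rewrite distE_int ler_sqrt ?ler_int; last by rewrite ler0z; lia.
  have [/andP[? ?] /andP[? ?]] := hb _ po.
  have [/andP[? ?] /andP[? ?]] := hb _ qo.
  rewrite !expr2; nia.
apply: le_trans (le_bigmax_seq _ _ xpredT _ Po isT).
apply: le_trans (le_bigmax_seq _ _ xpredT _ Qo isT).
by rewrite distE_int /= (_ : (P.1 - (P.1 + m)) ^+ 2 + (P.2 - (P.2 + m)) ^+ 2 = 2 * m ^+ 2) //; ring.
Qed.


Lemma len_inv (a b : int) p : p \in orb (a, b) -> length_formula p = length_formula (a, b).
Proof.
move: p; apply: (orbit_ind a b (fun p => length_formula p = length_formula (a, b))); rewrite /length_formula /=; lia.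
Qed.

Lemma facts1 (R : realType) (a b : int) : 0 <= a -> 2 * a <= b ->
  [/\ sq_side R (orb (a, b)) = (2 * b - a)%:~R,
      diamE R (orb (a, b)) = Num.sqrt 2 * (2 * b - a)%:~R &
      orbit_length R (orb (a, b)) = (4 * (2 * b - a))%:~R].
Proof.
move=> a0 ab.
have hb : forall p, p \in orb (a, b) -> inbox (- b) (a - b) (2 * b - a) p.
  by apply: (orbit_ind a b (inbox _ _ _)); rewrite /inbox /=; lia.
have Po : (- b, a - b) \in orb (a, b) by rewrite in_orb eqxx !orbT.
have Qo : ((- b, a - b).1 + (2 * b - a), (- b, a - b).2 + (2 * b - a)) \in orb (a, b).
  have e1 : - b + (2 * b - a) = b - a by ring.
  have e2 : a - b + (2 * b - a) = b by ring.
  by rewrite /= e1 e2 in_orb eqxx !orbT.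
split.
- exact: box_sq hb Po Qo.
- by apply: box_diam hb Po Qo; lia.
- rewrite /orbit_length (len_inv _ _ _ (rep_in _ _ Po)) /length_formula /=; congr intmul; lia.
Qed.

Lemma facts2 (R : realType) (a b : int) : 1 <= b -> 2 * b <= a ->
  [/\ sq_side R (orb (a, b)) = (2 * a - b)%:~R,
      diamE R (orb (a, b)) = Num.sqrt 2 * (2 * a - b)%:~R &
      orbit_length R (orb (a, b)) = (4 * (2 * a - b))%:~R].
Proof.
move=> a0 ab.
have hb : forall p, p \in orb (a, b) -> inbox (b - a) (- a) (2 * a - b) p.
  by apply: (orbit_ind a b (inbox _ _ _)); rewrite /inbox /=; lia.
have Po : (b - a, - a) \in orb (a, b) by rewrite in_orb eqxx !orbT.
have Qo : ((b - a, - a).1 + (2 * a - b), (b - a, - a).2 + (2 * a - b)) \in orb (a, b).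
  have e1 : b - a + (2 * a - b) = a by ring.
  have e2 : - a + (2 * a - b) = a - b by ring.
  by rewrite /= e1 e2 in_orb eqxx !orbT.
split.
- exact: box_sq hb Po Qo.
- by apply: box_diam hb Po Qo; lia.
- rewrite /orbit_length (len_inv _ _ _ (rep_in _ _ Po)) /length_formula /=; congr intmul; lia.
Qed.


Definition isrep (x : pt) : bool :=
  ((0 <= x.1) && (2 * x.1 <= x.2)) || ((1 <= x.2) && (2 * x.2 <= x.1)).
Definition sqr (M : nat) : seq pt :=
  [seq (i%:Z, j%:Z) | i <- iota 0 M.+1, j <- iota 0 M.+1].
Definition rl (M : nat) : seq pt := [seq x <- sqr M | isrep x].

Lemma mem_sqr M x : (x \in sqr M) = (0 <= x.1 <= M%:Z) && (0 <= x.2 <= M%:Z).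
Proof.
apply/allpairsP/idP => [[[i j] [hi hj ->]]|].
  by move: hi hj; rewrite !mem_iota /=; lia.
case: x => a b h; simpl in h; exists (`|a|%N, `|b|%N); rewrite !mem_iota /=.
split; [lia|lia|congr pair; lia].
Qed.

Lemma sqr_uniq M : uniq (sqr M).
Proof.
apply: allpairs_uniq; rewrite ?iota_uniq // => -[i j] [k l] _ _ /= [] -> ->.
by [].
Qed.

Lemma rl_uniq M : uniq (rl M).
Proof. exact/filter_uniq/sqr_uniq. Qed.

Lemma canon (a b : int) : 0 <= a -> 0 <= b ->
  exists r : pt, [/\ isrep r, 0 <= r.1 <= Num.max a b, 0 <= r.2 <= Num.max a b & orb r = orb (a, b)].
Proof.
move=> a0 b0.
have [h1|h1] := leP (2 * a) b.
  by exists (a, b); split => //; rewrite /isrep /=; lia.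
have [h2|h2] := leP a b.
  exists (b - a, b); rewrite orbit_K1; split => //; rewrite /isrep /=; lia.
have [h3|h3] := eqVneq b 0.
  exists (0, a); rewrite h3 orbit_swap0; split => //; rewrite /isrep /=; lia.
have [h4|h4] := leP (2 * b) a.
  by exists (a, b); split => //; rewrite /isrep /=; lia.
exists (a, a - b); rewrite orbit_K2; split => //; rewrite /isrep /=; lia.
Qed.

Lemma orbitsE M : orbits M = [fset orb x | x in rl M]%fset.
Proof.
apply/fsetP => o; apply/imfsetP/imfsetP => -[o' + ->].
  move=> /allpairsP [[i j] [hi hj ->]].
  have [r [hr r1 r2 <-]] := @canon i%:Z j%:Z isT isT.
  exists r => //; rewrite /rl mem_filter hr mem_sqr.
  move: hi hj r1 r2; rewrite !mem_iota /=; lia.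
move=> ho; exists (orb o') => //.
move: ho; rewrite /rl mem_filter mem_sqr => /andP[_].
case: o' => a b h; simpl in h; apply/allpairsP; exists (`|a|%N, `|b|%N); rewrite !mem_iota /=.
split; [lia|lia|congr orb; congr pair; lia].
Qed.

Lemma orb_inj M : {in rl M &, injective orb}.
Proof.
move=> [a b] [c d]; rewrite /rl !mem_filter => /andP[h1 _] /andP[h2 _] e.
have : (a, b) \in orb (c, d) by rewrite -e in_orb eqxx.
move: h1 h2; rewrite /isrep in_orb !xpair_eqE /= => h1 h2 h.
apply/eqP; rewrite xpair_eqE; move: h1 h2 h; lia.
Qed.

Lemma enum_rl M : perm_eq (enum_finmem (mem (rl M))) (rl M).
Proof.
apply: uniq_perm; rewrite ?enum_finmem_uniq ?rl_uniq // => x.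
by rewrite enum_finmemE.
Qed.

Lemma sum_orbits (R : realType) M (F : {fset pt} -> R) :
  \sum_(o <- orbits M) F o = \sum_(r <- rl M) F (orb r).
Proof.
rewrite orbitsE big_imfset; last exact: orb_inj.
exact: perm_big (enum_rl M).
Qed.

Lemma card_orbits M : #|` orbits M| = size (rl M).
Proof.
rewrite orbitsE card_in_imfset; last exact: orb_inj.
exact: perm_size (enum_rl M).
Qed.


Definition hw (w : pt -> int) (i j : nat) : int :=
  if isrep (i%:Z, j%:Z) then w (i%:Z, j%:Z) else 0.

Lemma sum_rl (w : pt -> int) M :
  \sum_(r <- rl M) w r = \sum_(i <- iota 0 M.+1) \sum_(j <- iota 0 M.+1) hw w i j.
Proof. by rewrite big_filter big_mkcond big_allpairs_dep. Qed.

Lemma iotaS1 n : iota 0 n.+1 = iota 0 n ++ [:: n].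
Proof. by rewrite -addn1 iotaD. Qed.

Lemma sq_step (h : nat -> nat -> int) n :
  \sum_(i <- iota 0 n.+2) \sum_(j <- iota 0 n.+2) h i j =
  \sum_(i <- iota 0 n.+1) \sum_(j <- iota 0 n.+1) h i j
  + \sum_(j <- iota 0 n.+1) h n.+1 j + \sum_(i <- iota 0 n.+2) h i n.+1.
Proof.
rewrite (iotaS1 n.+1) !big_cat !big_seq1.
under eq_bigr do rewrite big_cat big_seq1.
rewrite big_split big_cat big_seq1 /=.
set A := \sum_(i <- _) _; set B := \sum_(i <- _) _; set C := \sum_(i <- _) _.
ring.
Qed.

Lemma sumk_formula (c d : int) (k n : nat) :
  2 * \sum_(j <- iota 0 n) (if (j <= k)%N then c - d * j%:Z else 0) =
  if (n <= k.+1)%N then 2 * c * n%:Z - d * n%:Z * (n%:Z - 1)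
  else 2 * c * k.+1%:Z - d * k.+1%:Z * k%:Z.
Proof.
elim: n => [|n IH]; first by rewrite big_nil /=; lia.
rewrite iotaS1 big_cat big_seq1 /= mulrDr IH.
case: (leqP n k) => hnk.
  have e1 : (n <= k.+1)%N by lia.
  have e2 : (n.+1 <= k.+1)%N by lia.
  rewrite e1 e2; nia.
have [->|hn] := eqVneq n k.+1.
  by rewrite leqnn ltnn; lia.
have e1 : (n <= k.+1)%N = false by lia.
have e2 : (n.+1 <= k.+1)%N = false by lia.
rewrite e1 e2; lia.
Qed.

Lemma sumk_big (c d : int) (k n : nat) : (k < n)%N ->
  2 * \sum_(j <- iota 0 n) (if (j <= k)%N then c - d * j%:Z else 0) =
  2 * c * k.+1%:Z - d * k.+1%:Z * k%:Z.
Proof.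
move=> kn; rewrite sumk_formula; case: ifP => // h.
have -> : n = k.+1 by apply/eqP; rewrite eqn_leq h kn.
rewrite (_ : (k.+1)%:Z - 1 = k%:Z) //; lia.
Qed.

Lemma colS_eq (w : pt -> int) (c d : int) (b : nat) : (0 < b)%N ->
  (forall i : nat, (2 * i <= b)%N -> w (i%:Z, b%:Z) = c - d * i%:Z) ->
  \sum_(i <- iota 0 b.+1) hw w i b =
  \sum_(i <- iota 0 b.+1) (if (i <= b./2)%N then c - d * i%:Z else 0).
Proof.
move=> b0 hyp; apply: eq_big_seq => i; rewrite mem_iota => hi.
rewrite /hw /isrep /= -divn2.
case: ifP => h1; case: ifP => h2 //.
- apply: hyp; lia.
- lia.
- lia.
Qed.

Lemma rowS_eq (w : pt -> int) (c d : int) (b : nat) : (0 < b)%N ->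
  (forall j : nat, (0 < j)%N -> (2 * j <= b)%N -> w (b%:Z, j%:Z) = c - d * j%:Z) ->
  \sum_(j <- iota 0 b) hw w b j =
  \sum_(j <- iota 0 b) (if (j <= b./2)%N then c - d * j%:Z else 0) - c.
Proof.
case: b => // b _ hyp.
rewrite [iota 0 b.+1]/= !big_cons.
rewrite {1}/hw /isrep /= add0r mulr0 subr0 addrAC subrr add0r.
apply: eq_big_seq => j; rewrite mem_iota => hj.
rewrite /hw /isrep /= uphalfE -divn2.
case: ifP => h1; case: ifP => h2 //.
- apply: hyp; lia.
- lia.
- lia.
Qed.


Definition mv (x : pt) : int := if 2 * x.1 <= x.2 then 2 * x.2 - x.1 else 2 * x.1 - x.2.
Definition onew (x : pt) : int := 1.

Definition SS M := \sum_(r <- rl M) mv r.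
Definition NN M := \sum_(r <- rl M) onew r.

Lemma step_gen (w : pt -> int) (c d : int) M :
  (forall i : nat, (2 * i <= M.+1)%N -> w (i%:Z, M.+1%:Z) = c - d * i%:Z) ->
  (forall j : nat, (0 < j)%N -> (2 * j <= M.+1)%N -> w (M.+1%:Z, j%:Z) = c - d * j%:Z) ->
  2 * \sum_(r <- rl M.+1) w r = 2 * \sum_(r <- rl M) w r
     + 2 * (2 * c * (M.+1./2).+1%:Z - d * (M.+1./2).+1%:Z * (M.+1./2)%:Z) - 2 * c.
Proof.
move=> hc hr; rewrite !sum_rl sq_step.
rewrite (rowS_eq _ c d) // (colS_eq _ c d) //.
have s1 : (M.+1./2 < M.+1)%N by rewrite -divn2; lia.
have s2 : (M.+1./2 < M.+2)%N by rewrite -divn2; lia.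
rewrite !mulrDr (sumk_big _ _ _ _ s1) (sumk_big _ _ _ _ s2); ring.
Qed.

Lemma SS_step M : 2 * SS M.+1 = 2 * SS M
  + 2 * (2 * (2 * M.+1%:Z) * (M.+1./2).+1%:Z - 1 * (M.+1./2).+1%:Z * (M.+1./2)%:Z) - 2 * (2 * M.+1%:Z).
Proof.
apply: step_gen => [i hi|j hj0 hj]; rewrite /mv /=; case: ifP => h; lia.
Qed.

Lemma NN_step M : 2 * NN M.+1 = 2 * NN M
  + 2 * (2 * 1 * (M.+1./2).+1%:Z - 0 * (M.+1./2).+1%:Z * (M.+1./2)%:Z) - 2 * 1.
Proof.
by apply: step_gen => [i hi|j hj0 hj]; rewrite /onew mul0r subr0.
Qed.

Lemma SN0 : SS 0 = 0 /\ NN 0 = 1.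
Proof. by rewrite /SS /NN !sum_rl !big_seq1 /hw /isrep /mv /onew /=. Qed.

Lemma SN_bound M :
  [/\ 0 <= 12 * SS M - 7 * M%:Z ^+ 3, 12 * SS M - 7 * M%:Z ^+ 3 <= 20 * (M%:Z + 1) ^+ 2
    & 2 * NN M = (M%:Z + 1) ^+ 2 + 1 - (M %% 2)%N%:Z].
Proof.
elim: M => [|M [IH1 IH2 IH3]].
  by case: SN0 => -> ->.
have hs := SS_step M; have hn := NN_step M.
set k := M.+1./2 in hs hn.
have hk : (M.+1 = 2 * k)%N \/ (M.+1 = 2 * k + 1)%N by rewrite /k -divn2; lia.
have eK1 : k.+1%:Z = k%:Z + 1 by lia.
rewrite eK1 in hs hn.
set K := k%:Z in hs hn.
case: hk => hk.
- have eK : M.+1%:Z = 2 * K by rewrite /K; lia.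
  have eM : M%:Z = 2 * K - 1 by rewrite /K; lia.
  have hM : (M %% 2 = 1)%N by lia.
  have hM1 : (M.+1 %% 2 = 0)%N by lia.
  rewrite hM in IH3; rewrite hM1 eK; rewrite eM in IH1 IH2 IH3; rewrite eK in hs hn.
  have e1 : 12 * SS M.+1 - 7 * (2 * K) ^+ 3 = (12 * SS M - 7 * (2 * K - 1) ^+ 3) + (78 * K - 7).
    by rewrite (_ : 12 * SS M.+1 = 6 * (2 * SS M.+1)); [rewrite hs; ring | ring].
  have e2 : 2 * NN M.+1 = 2 * NN M + 4 * K + 2 by rewrite hn; ring.
  have p1 : (2 * K - 1 + 1) ^+ 2 = 4 * (K * K) by ring.
  have p2 : (2 * K + 1) ^+ 2 = 4 * (K * K) + 4 * K + 1 by ring.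
  rewrite p1 in IH2 IH3; rewrite e1 e2 p2.
  have K1 : 1 <= K by rewrite /K; lia.
  clear hs hn eK1 hk eK eM hM hM1 e1 e2 p1 p2.
  set A := 12 * SS M - _ in IH1 IH2 *; set Q := K * K in IH2 IH3 *.
  split; lia.
- have eK : M.+1%:Z = 2 * K + 1 by rewrite /K; lia.
  have eM : M%:Z = 2 * K by rewrite /K; lia.
  have hM : (M %% 2 = 0)%N by lia.
  have hM1 : (M.+1 %% 2 = 1)%N by lia.
  rewrite hM in IH3; rewrite hM1 eK; rewrite eM in IH1 IH2 IH3; rewrite eK in hs hn.
  have e1 : 12 * SS M.+1 - 7 * (2 * K + 1) ^+ 3 = (12 * SS M - 7 * (2 * K) ^+ 3) + (42 * K + 17).
    by rewrite (_ : 12 * SS M.+1 = 6 * (2 * SS M.+1)); [rewrite hs; ring | ring].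
  have e2 : 2 * NN M.+1 = 2 * NN M + 4 * K + 2 by rewrite hn; ring.
  have p1 : (2 * K + 1) ^+ 2 = 4 * (K * K) + 4 * K + 1 by ring.
  have p2 : (2 * K + 1 + 1) ^+ 2 = 4 * (K * K) + 8 * K + 4 by ring.
  rewrite p1 in IH2 IH3; rewrite e1 e2 p2.
  have K1 : 0 <= K by rewrite /K; lia.
  clear hs hn eK1 hk eK eM hM hM1 e1 e2 p1 p2.
  set A := 12 * SS M - _ in IH1 IH2 *; set Q := K * K in IH2 IH3 *.
  split; lia.
Qed.


Lemma vals (R : realType) r : isrep r ->
  [/\ sq_side R (orb r) = (mv r)%:~R, diamE R (orb r) = Num.sqrt 2 * (mv r)%:~R &
      orbit_length R (orb r) = (4 * mv r)%:~R].
Proof.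
case: r => a b; rewrite /isrep /mv /= => /orP[/andP[h1 h2]|/andP[h1 h2]].
  by rewrite h2; apply: facts1.
rewrite (_ : (2 * a <= b) = false); last by lia.
exact: facts2.
Qed.

Lemma NN_size M : NN M = (size (rl M))%:Z.
Proof.
rewrite /NN; elim: (rl M) => [|x s IH]; first by rewrite big_nil.
by rewrite big_cons IH /onew /=; lia.
Qed.

Lemma avg_eq (R : realType) (f : {fset pt} -> R) (g : pt -> R) M :
  (forall r, isrep r -> f (orb r) = g r) ->
  avgO f M = (\sum_(r <- rl M) g r) / (NN M)%:~R.
Proof.
move=> hfg; rewrite /avgO sum_orbits card_orbits NN_size.
congr (_ / _); apply: eq_big_seq => r; rewrite mem_filter => /andP[hr _].
exact: hfg.
Qed.

Lemma int_bound M : 0 < NN M /\ `|12 * SS M - 14 * M%:Z * NN M| <= 72 * NN M.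
Proof.
have [h1 h2 h3] := SN_bound M.
have hp : ((M %% 2)%N <= 1)%N by lia.
move: (M %% 2)%N hp h3 => p hp h3.
set S := SS M in h1 h2 *; set N := NN M in h3 *.
have e : 14 * M%:Z * N = 7 * M%:Z * (2 * N) by ring.
rewrite e h3.
have q1 : 7 * M%:Z * ((M%:Z + 1) ^+ 2 + 1 - p%:Z) = 7 * M%:Z ^+ 3 + 14 * (M%:Z * M%:Z) + 14 * M%:Z - 7 * M%:Z * p%:Z by ring.
have q2 : (M%:Z + 1) ^+ 2 = M%:Z * M%:Z + 2 * M%:Z + 1 by ring.
rewrite q1; rewrite q2 in h2 h3.
set E := 12 * S - 7 * M%:Z ^+ 3 in h1 h2.
have -> : 12 * S - (7 * M%:Z ^+ 3 + 14 * (M%:Z * M%:Z) + 14 * M%:Z - 7 * M%:Z * p%:Z) =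
   E - 14 * (M%:Z * M%:Z) - 14 * M%:Z + 7 * M%:Z * p%:Z by rewrite /E; ring.
have hmp : 0 <= M%:Z * p%:Z <= M%:Z by nia.
set Q := M%:Z * M%:Z in h2 h3 *; set MP := M%:Z * p%:Z in hmp *.
have hQ : 0 <= Q by rewrite /Q; nia.
clear e q1 q2.
split; first lia.
rewrite ler_norml; apply/andP; split; lia.
Qed.

Lemma natzR (R : realType) (n : nat) : ((n%:Z)%:~R : R) = n%:R.
Proof. by []. Qed.

Lemma real_bound (R : realType) M :
  `|(SS M)%:~R / (NN M)%:~R - 7 / 6 * M%:R| <= 6 :> R.
Proof.
have [hN hb] := int_bound M.
set s : R := (SS M)%:~R; set n : R := (NN M)%:~R; set m : R := M%:R.
have E1 : ((12 * SS M - 14 * M%:Z * NN M)%:~R : R) = 12 * s - 14 * m * n.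
  by rewrite rmorphB !rmorphM.
have E2 : ((72 * NN M)%:~R : R) = 72 * n by rewrite rmorphM.
have hb' : `|12 * s - 14 * m * n| <= 72 * n.
  by rewrite -E1 -E2 -intr_norm ler_int.
have hN' : 0 < n by rewrite ltr0z.
have -> : s / n - 7 / 6 * m = (12 * s - 14 * m * n) / (12 * n).
  by field; rewrite gt_eqF.
rewrite normrM normfV (gtr0_norm (x := 12 * n)); last by lra.
rewrite ler_pdivrMr; last by lra.
lra.
Qed.

Lemma sum_mv (R : realType) M : \sum_(r <- rl M) ((mv r)%:~R : R) = (SS M)%:~R.
Proof. by rewrite /SS rmorph_sum. Qed.

Theorem mainTheorem17 (R : realType) :
  (exists C : R, forall M : nat, (0 < M)%N ->
     `|avgO (@diamE R) M - 7 * Num.sqrt 2 / 6 * M%:R| <= C) /\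
  (exists C : R, forall M : nat, (0 < M)%N ->
     `|avgO (@sq_side R) M - 7 / 6 * M%:R| <= C) /\
  (exists C : R, forall M : nat, (0 < M)%N ->
     `|avgO (@orbit_length R) M - 14 / 3 * M%:R| <= C).
Proof.
split; [|split].
- exists (Num.sqrt 2 * 6) => M _.
  rewrite (@avg_eq R _ (fun r => Num.sqrt 2 * (mv r)%:~R) M); last by move=> r /(vals R) [].
  rewrite -mulr_sumr sum_mv.
  have -> : Num.sqrt 2 * (SS M)%:~R / (NN M)%:~R - 7 * Num.sqrt 2 / 6 * M%:R =
            Num.sqrt 2 * ((SS M)%:~R / (NN M)%:~R - 7 / 6 * M%:R) :> R by ring.
  rewrite normrM ger0_norm ?sqrtr_ge0 //; apply: ler_wpM2l; first exact: sqrtr_ge0.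
  exact: real_bound.
- exists 6 => M _.
  rewrite (@avg_eq R _ (fun r => (mv r)%:~R) M); last by move=> r /(vals R) [].
  by rewrite sum_mv real_bound.
- exists (4 * 6) => M _.
  rewrite (@avg_eq R _ (fun r => 4 * (mv r)%:~R) M); last first.
    by move=> r /(vals R) [_ _ ->]; rewrite rmorphM.
  rewrite -mulr_sumr sum_mv.
  have -> : 4 * (SS M)%:~R / (NN M)%:~R - 14 / 3 * M%:R =
            4 * ((SS M)%:~R / (NN M)%:~R - 7 / 6 * M%:R) :> R.
    by field; rewrite intr_eq0 gt_eqF //; case: (int_bound M).
  rewrite normrM ger0_norm //; apply: ler_wpM2l => //.
  exact: real_bound.
Qed.
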